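(* Let $\mathbf{Q}=(Q,Z,\cdot)$ be a finite automaton, $q\in Q$, $u\in Z^*$, and $\mathcal{C}$ a Conway category. If the identity $\Gamma(\mathbf{Q},q)$ holds in $\mathcal{C}$, then so does $\Gamma(\mathbf{Q},qu)$. Consequently, if $(\mathbf{Q},q)$ is initially connected, then $\Gamma(\mathbf{Q})$ holds in $\mathcal{C}$ if and only if $\Gamma(\mathbf{Q},q)$ holds in $\mathcal{C}$.
   Context: Cartesian categories have chosen finite products (terminal object $T$, projections $\pi_i$, tupling $\langle\cdot\rangle$, $!_A:A\to T$, $f\times g$), strictly associative; composition is written $g\circ f$; $\Delta_{A^n}=\langle 1_A,\ldots,1_A\rangle:A\to A^n$. A dagger operation maps $f:A\times C\to A$ to $f^\dagger:C\to A$. A Conway category is a cartesian category with dagger satisfying: $(f\circ(1_A\times g))^\dagger=f^\dagger\circ g$ ($f:A\times B\to A$, $g:C\to B$); $f^{\dagger\dagger}=(f\circ(\Delta_{A^2}\times 1_C))^\dagger$ ($f:A\times A\times C\to A$); $(f\circ\langle g,\pi_2^{A\times C}\rangle)^\dagger=f\circ\langle (g\circ\langle f,\pi_2^{B\times C}\rangle)^\dagger,1_C\rangle$ ($f:B\times C\to A$, $g:A\times C\to B$). A finite automaton $\mathbf{Q}=(Q,Z,\cdot)$ has finite nonempty state set $Q$, finite nonempty input alphabet $Z$ and action $Q\times Z\to Q$, extended to words $u\in Z^*$, written $qu$. Write $Q=\{q_1,\ldots,q_n\}$, identified with $\{1,\ldots,n\}$, and $Z=\{a_1,\ldots,a_m\}$.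 For an object $A$ and $i\in[n]$ let $\rho_i^{\mathbf{Q},A}=\langle\pi^{A^n}_{ia_1},\ldots,\pi^{A^n}_{ia_m}\rangle:A^n\to A^m$ ($ia_j$ is the index of $q_i\cdot a_j$). For $f:A^m\times C\to A$ let $f^{\mathbf{Q},A}:A^n\times C\to A^n$ have components $\pi_i^{A^n}\circ f^{\mathbf{Q},A}=f\circ(\rho_i^{\mathbf{Q},A}\times 1_C)$. The identity $\Gamma(\mathbf{Q})$ holds in $\mathcal{C}$ if $(f^{\mathbf{Q},A})^\dagger=\Delta_{A^n}\circ(f\circ(\Delta_{A^m}\times 1_C))^\dagger$ for all objects $A,C$ and all $f:A^m\times C\to A$; for a state $q_i$, $\Gamma(\mathbf{Q},q_i)$ holds if $\pi_i^{A^n}\circ(f^{\mathbf{Q},A})^\dagger=(f\circ(\Delta_{A^m}\times 1_C))^\dagger$ for all such $A,C,f$. $(\mathbf{Q},q)$ is initially connected if every state of $\mathbf{Q}$ equals $qu$ for some word $u\in Z^*$. *)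

(* Defs.v *)
From mathcomp Require Import all_boot.
Set Implicit Arguments. Unset Strict Implicit. Unset Printing Implicit Defensive.

Record CartCat : Type := MkCartCat {
  Ob :> Type;
  Hom : Ob -> Ob -> Type;
  comp : forall A B D : Ob, Hom B D -> Hom A B -> Hom A D;
  idm : forall A : Ob, Hom A A;
  comp_assoc : forall (A B D E : Ob) (h : Hom D E) (g : Hom B D) (f : Hom A B),
      comp h (comp g f) = comp (comp h g) f;
  comp_idl : forall (A B : Ob) (f : Hom A B), comp (idm B) f = f;
  comp_idr : forall (A B : Ob) (f : Hom A B), comp f (idm A) = f;
  term : Ob;
  bang : forall A : Ob, Hom A term;
  bang_uniq : forall (A : Ob) (f : Hom A term), f = bang A;
  prod : Ob -> Ob -> Ob;
  pi1 : forall A B : Ob, Hom (prod A B) A;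
  pi2 : forall A B : Ob, Hom (prod A B) B;
  pair : forall X A B : Ob, Hom X A -> Hom X B -> Hom X (prod A B);
  pi1_pair : forall (X A B : Ob) (f : Hom X A) (g : Hom X B),
      comp (pi1 A B) (pair f g) = f;
  pi2_pair : forall (X A B : Ob) (f : Hom X A) (g : Hom X B),
      comp (pi2 A B) (pair f g) = g;
  pair_uniq : forall (X A B : Ob) (h : Hom X (prod A B)),
      pair (comp (pi1 A B) h) (comp (pi2 A B) h) = h
}.

Arguments Hom {c} _ _.
Arguments comp {c A B D} _ _.
Arguments idm {c} A.
Arguments term {c}.
Arguments bang {c} A.
Arguments prod {c} _ _.
Arguments pi1 {c} A B.
Arguments pi2 {c} A B.
Arguments pair {c X A B} _ _.

Section CartOps.
Variable K : CartCat.

Definition pmap (A B A' B' : K) (f : Hom A A') (g : Hom B B') :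
  Hom (prod A B) (prod A' B') :=
  pair (comp f (pi1 A B)) (comp g (pi2 A B)).

(* A^(k+1) = A x A^k,  A^1 = A *)
Fixpoint powS (A : K) (k : nat) : K :=
  match k with
  | 0 => A
  | k'.+1 => prod A (powS A k')
  end.

(* i-th projection A^(k+1) -> A (0-based; indices >= k+1 are never used) *)
Fixpoint projS (A : K) (k : nat) (i : nat) : Hom (powS A k) A :=
  match k as k0 return Hom (powS A k0) A with
  | 0 => idm A
  | k'.+1 =>
      match i with
      | 0 => pi1 A (powS A k')
      | i'.+1 => comp (projS A k' i') (pi2 A (powS A k'))
      end
  end.

Fixpoint tupS (X A : K) (k : nat) (fs : nat -> Hom X A) : Hom X (powS A k) :=
  match k as k0 return Hom X (powS A k0) with
  | 0 => fs 0
  | k'.+1 => pair (fs 0) (tupS k' (fun i => fs i.+1))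
  end.

Definition projI (A : K) (k : nat) (i : 'I_k.+1) : Hom (powS A k) A :=
  projS A k i.
Definition tupI (X A : K) (k : nat) (fs : 'I_k.+1 -> Hom X A) : Hom X (powS A k) :=
  tupS k (fun j => fs (inord j)).

Definition diagS (A : K) (k : nat) : Hom A (powS A k) :=
  tupI (fun _ : 'I_k.+1 => idm A).
End CartOps.

Arguments pmap {K A B A' B'} _ _.
Arguments powS {K} A k.
Arguments projS {K} A k i.
Arguments tupS {K X A} k fs.
Arguments projI {K} A {k} i.
Arguments tupI {K X A k} fs.
Arguments diagS {K} A k.

Record ConwayCat : Type := MkConwayCat {
  ccat :> CartCat;
  dagger : forall A C : ccat, Hom (prod A C) A -> Hom C A;
  conway_param : forall (A B C : ccat) (f : Hom (prod A B) A) (g : Hom C B),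
      dagger (comp f (pmap (idm A) g)) = comp (dagger f) g;
  (* double dagger identity, f : A x A x C -> A (right-nested product);
     Delta_{A^2} x 1_C : A x C -> A x A x C is <pi1, <pi1, pi2>> *)
  conway_dbl : forall (A C : ccat) (f : Hom (prod A (prod A C)) A),
      dagger (dagger f) =
      dagger (comp f (pair (pi1 A C) (pair (pi1 A C) (pi2 A C))));
  conway_comp : forall (A B C : ccat) (f : Hom (prod B C) A) (g : Hom (prod A C) B),
      dagger (comp f (pair g (pi2 A C))) =
      comp f (pair (dagger (comp g (pair f (pi2 B C)))) (idm C))
}.

Arguments dagger {c A C} _.

(* Finite automata: Q = 'I_(n'+1) (n = n'+1 states),                     *)
(* Z = 'I_(m'+1) (m = m'+1 letters), action delta.                       *)
Definition run (n' m' : nat) (delta : 'I_n'.+1 -> 'I_m'.+1 -> 'I_n'.+1)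
  (q : 'I_n'.+1) (u : seq 'I_m'.+1) : 'I_n'.+1 := foldl delta q u.

Definition initially_connected (n' m' : nat)
  (delta : 'I_n'.+1 -> 'I_m'.+1 -> 'I_n'.+1) (q : 'I_n'.+1) : Prop :=
  forall p : 'I_n'.+1, exists u : seq 'I_m'.+1, run delta q u = p.

Section Gamma.
Variable K : ConwayCat.
Variables (n' m' : nat) (delta : 'I_n'.+1 -> 'I_m'.+1 -> 'I_n'.+1).

Definition rhoQ (A : K) (i : 'I_n'.+1) : Hom (powS A n') (powS A m') :=
  tupI (fun j : 'I_m'.+1 => projI A (delta i j)).

Definition fQ (A C : K) (f : Hom (prod (powS A m') C) A) :
  Hom (prod (powS A n') C) (powS A n') :=
  tupI (fun i : 'I_n'.+1 => comp f (pmap (rhoQ A i) (idm C))).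

Definition GammaQ : Prop :=
  forall (A C : K) (f : Hom (prod (powS A m') C) A),
    dagger (fQ f) = comp (diagS A n') (dagger (comp f (pmap (diagS A m') (idm C)))).

Definition GammaQat (i : 'I_n'.+1) : Prop :=
  forall (A C : K) (f : Hom (prod (powS A m') C) A),
    comp (projI A i) (dagger (fQ f)) = dagger (comp f (pmap (diagS A m') (idm C))).
End Gamma.

Arguments GammaQ K {n' m'} delta.
Arguments GammaQat K {n' m'} delta i.

(* Main.v *)
Require Import Defs.
From mathcomp Require Import all_boot.
Require Import Defs.
Set Implicit Arguments. Unset Strict Implicit. Unset Printing Implicit Defensive.


Section Cart.
Variable K : CartCat.

Lemma hom_pair_ext (X A B : K) (h1 h2 : Hom X (prod A B)) :
  comp (pi1 A B) h1 = comp (pi1 A B) h2 -> comp (pi2 A B) h1 = comp (pi2 A B) h2 -> h1 = h2.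
Proof. move=> e1 e2. by rewrite -(pair_uniq h1) -(pair_uniq h2) e1 e2. Qed.

Lemma pi1_pairA (X Y A B : K) (h : Hom A Y) (f : Hom X A) (g : Hom X B) :
  comp (comp h (pi1 A B)) (pair f g) = comp h f.
Proof. by rewrite -comp_assoc pi1_pair. Qed.
Lemma pi2_pairA (X Y A B : K) (h : Hom B Y) (f : Hom X A) (g : Hom X B) :
  comp (comp h (pi2 A B)) (pair f g) = comp h g.
Proof. by rewrite -comp_assoc pi2_pair. Qed.

Lemma projS_tupS (X A : K) k (fs : nat -> Hom X A) i :
  i <= k -> comp (projS A k i) (tupS k fs) = fs i.
Proof.
elim: k fs i => [|k IH] fs [|i] //= Hi.
- by rewrite comp_idl.
- by rewrite pi1_pair.
- by rewrite -comp_assoc pi2_pair IH.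
Qed.

Lemma pow_ext (X A : K) k (h1 h2 : Hom X (powS A k)) :
  (forall i, i <= k -> comp (projS A k i) h1 = comp (projS A k i) h2) -> h1 = h2.
Proof.
elim: k h1 h2 => [|k IH] h1 h2 H.
- by have := H 0 (leqnn 0); rewrite /= !comp_idl.
- apply: hom_pair_ext; first exact: (H 0).
  apply: IH => i Hi. rewrite !comp_assoc. exact: (H i.+1).
Qed.

Lemma projI_tupI (X A : K) k (fs : 'I_k.+1 -> Hom X A) (i : 'I_k.+1) :
  comp (projI A i) (tupI fs) = fs i.
Proof. by rewrite /projI /tupI projS_tupS ?inord_val // -ltnS. Qed.

Lemma pow_extI (X A : K) k (h1 h2 : Hom X (powS A k)) :
  (forall i : 'I_k.+1, comp (projI A i) h1 = comp (projI A i) h2) -> h1 = h2.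
Proof. move=> H; apply: pow_ext => i Hi. have Hi' : i < k.+1 by []. exact: (H (Ordinal Hi')). Qed.

End Cart.

Ltac simp := repeat progress rewrite ?comp_assoc ?pi1_pair ?pi2_pair ?pi1_pairA ?pi2_pairA ?comp_idl ?comp_idr.

Section Conway.
Variable K : ConwayCat.
Variables (n' m' : nat) (delta : 'I_n'.+1 -> 'I_m'.+1 -> 'I_n'.+1).

Definition fstP (A : K) k : Hom (powS (prod A A) k) (powS A k) :=
  tupS k (fun l => comp (pi1 A A) (projS (prod A A) k l)).

Lemma projI_fstP (A : K) k (l : 'I_k.+1) :
  comp (projI A l) (fstP A k) = comp (pi1 A A) (projI (prod A A) l).
Proof. by rewrite /projI /fstP projS_tupS // -ltnS. Qed.

Lemma key1 (A : K) (i : 'I_n'.+1) :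
  comp (fstP A m') (rhoQ delta (prod A A) i) = comp (rhoQ delta A i) (fstP A n').
Proof.
apply: pow_extI => l.
rewrite comp_assoc projI_fstP -comp_assoc projI_tupI.
by rewrite comp_assoc projI_tupI projI_fstP.
Qed.

Lemma step (q : 'I_n'.+1) (j : 'I_m'.+1) :
  GammaQat K delta q -> GammaQat K delta (delta q j).
Proof.
move=> H A C f.
pose f' := pair (comp f (pmap (fstP A m') (idm C)))
                (comp (projI A j) (comp (fstP A m') (pi1 _ C))).
have HQ := H (prod A A) C f'.
pose F := tupI (fun i : 'I_n'.+1 => pair (comp f (pmap (rhoQ delta A i) (idm C)))
             (comp (projI A (delta i j)) (pi1 (powS A n') C))).
pose G := comp (fstP A n') (pi1 _ C).
have E1 : fQ delta f' = comp F (pair G (pi2 _ C)).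
  apply: pow_extI => i.
  rewrite /fQ projI_tupI comp_assoc projI_tupI.
  apply: hom_pair_ext; rewrite /f' /G /pmap; simp.
  - rewrite -!comp_assoc; congr (comp f _); apply: hom_pair_ext; simp => //.
    by rewrite key1.
  - by rewrite -(comp_assoc (projI A j)) key1 comp_assoc /rhoQ projI_tupI.
have E2 : comp G (pair F (pi2 _ C)) = fQ delta f.
  rewrite /G -comp_assoc pi1_pair /F /fQ.
  apply: pow_extI => i.
  by rewrite comp_assoc projI_fstP -comp_assoc !projI_tupI pi1_pair.
rewrite E1 conway_comp E2 in HQ.
pose F0 := pair (comp f (pmap (diagS A m') (idm C))) (pi1 A C).
pose G0 := comp (pi1 A A) (pi1 (prod A A) C).
have E3 : comp f' (pmap (diagS (prod A A) m') (idm C)) = comp F0 (pair G0 (pi2 _ C)).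
  have D : comp (fstP A m') (diagS (prod A A) m') = comp (diagS A m') (pi1 A A).
    apply: pow_extI => l.
    rewrite comp_assoc projI_fstP -comp_assoc /diagS projI_tupI comp_idr.
    by rewrite comp_assoc projI_tupI comp_idl.
  apply: hom_pair_ext; rewrite /f' /F0 /G0 /pmap; simp.
  - rewrite -!comp_assoc; congr (comp f _); apply: hom_pair_ext; simp => //.
    by rewrite D.
  - by rewrite -(comp_assoc (projI A j)) D comp_assoc /diagS projI_tupI comp_idl.
have E4 : comp G0 (pair F0 (pi2 A C)) = comp f (pmap (diagS A m') (idm C)).
  by rewrite /G0 -comp_assoc pi1_pair /F0 pi1_pair.
rewrite E3 conway_comp E4 in HQ.
move: HQ; rewrite comp_assoc /F projI_tupI => /(congr1 (comp (pi2 A A))).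
rewrite /F0; simp => <-.
by [].
Qed.

End Conway.

Theorem corollary4p4 (K : ConwayCat) (n' m' : nat)
  (delta : 'I_n'.+1 -> 'I_m'.+1 -> 'I_n'.+1) (q : 'I_n'.+1) (u : seq 'I_m'.+1) :
  (GammaQat K delta q -> GammaQat K delta (run delta q u)) /\
  (initially_connected delta q -> (GammaQ K delta <-> GammaQat K delta q)).
Proof.
have P1 : forall q u, GammaQat K delta q -> GammaQat K delta (run delta q u).
  move=> q0 u0; rewrite /run; elim: u0 q0 => [|a u0 IH] q0 //= Hq.
  exact/IH/step.
split; first exact: P1.
move=> IC; split.
- move=> HG A C f. rewrite HG comp_assoc /diagS projI_tupI. exact: comp_idl.
- move=> Hq A C f. apply: pow_extI => p.
  have [u0 <-] := IC p.
  rewrite (P1 q u0 Hq) comp_assoc /diagS projI_tupI. by rewrite comp_idl.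
Qed.
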